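(* Let $0\le\lambda<\gamma\le\delta$ and let $\mathfrak{f}=\mathfrak{s}+\overline{\mathfrak{t}}\in\mathcal{R}_H^0(\gamma,\delta,\lambda)$ with $\mathfrak{s}(z)=z+\sum_{m\ge2}a_mz^m$, $\mathfrak{t}(z)=\sum_{m\ge2}b_mz^m$. Then for every $m\ge2$: (i) $|a_m|+|b_m|\le\frac{4(\gamma-\lambda)}{m^2[2\gamma+(\delta-\gamma)(m-1)]}$; (ii) $\big||a_m|-|b_m|\big|\le\frac{4(\gamma-\lambda)}{m^2[2\gamma+(\delta-\gamma)(m-1)]}$; (iii) $|a_m|\le\frac{4(\gamma-\lambda)}{m^2[2\gamma+(\delta-\gamma)(m-1)]}$. All these results are sharp, with equality in each for the function $\mathfrak{f}(z)=z+\sum_{m\ge2}\frac{4(\gamma-\lambda)}{m^2[2\gamma+(\delta-\gamma)(m-1)]}z^m$.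
   Context: Let $\mathcal{U}=\{z\in\mathbb{C}:|z|<1\}$. $\mathcal{H}^0$ denotes the class of complex-valued harmonic functions $\mathfrak{f}=\mathfrak{s}+\overline{\mathfrak{t}}$ on $\mathcal{U}$, where $\mathfrak{s}(z)=z+\sum_{m\ge2}a_mz^m$ and $\mathfrak{t}(z)=\sum_{m\ge2}b_mz^m$ are analytic in $\mathcal{U}$. For real $0\le\lambda<\gamma\le\delta$, $\mathcal{R}_H^0(\gamma,\delta,\lambda)$ is the class of $\mathfrak{f}=\mathfrak{s}+\overline{\mathfrak{t}}\in\mathcal{H}^0$ such that for all $z\in\mathcal{U}$, $\mathrm{Re}\left[\gamma\mathfrak{s}'(z)+\delta z\mathfrak{s}''(z)+\frac{\delta-\gamma}{2}z^2\mathfrak{s}'''(z)-\lambda\right]>\left|\gamma\mathfrak{t}'(z)+\delta z\mathfrak{t}''(z)+\frac{\delta-\gamma}{2}z^2\mathfrak{t}'''(z)\right|$. *)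

(* Defs.v *)
From Stdlib Require Import Reals Lra.
From Coquelicot Require Import Coquelicot.
Open Scope R_scope.

Definition inU (z : C) : Prop := Cmod z < 1.

Definition has_series (a : nat -> C) (s : C -> C) : Prop :=
  forall z : C, inU z -> is_pseries (K := C_AbsRing) (V := C_NormedModule) a z (s z).

(* Normalization of H^0: s(z) = z + sum_{m>=2} a_m z^m, t(z) = sum_{m>=2} b_m z^m. *)
Definition H0_coeffs (a b : nat -> C) : Prop :=
  a 0%nat = 0%C /\ a 1%nat = 1%C /\ b 0%nat = 0%C /\ b 1%nat = 0%C.

Definition cderiv (f : C -> C) (z l : C) : Prop :=
  is_derive (K := C_AbsRing) (V := C_NormedModule) f z l.

(* The operator  g |-> gamma g' + delta z g'' + (delta-gamma)/2 z^2 g''',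
   evaluated on given first, second and third derivatives. *)
Definition Lop (gam del : R) (g1 g2 g3 : C) (z : C) : C :=
  (RtoC gam * g1 + RtoC del * z * g2 + RtoC ((del - gam) / 2) * (z * z) * g3)%C.

(* f = s + conj t belongs to R_H^0(gamma, delta, lambda)
   (the H^0 normalization is imposed separately, via has_series/H0_coeffs). *)
Definition in_RH0 (gam del lam : R) (s t : C -> C) : Prop :=
  exists s1 s2 s3 t1 t2 t3 : C -> C,
    (forall z, inU z ->
       cderiv s z (s1 z) /\ cderiv s1 z (s2 z) /\ cderiv s2 z (s3 z) /\
       cderiv t z (t1 z) /\ cderiv t1 z (t2 z) /\ cderiv t2 z (t3 z)) /\
    (forall z, inU z ->
       Re (Lop gam del (s1 z) (s2 z) (s3 z) z - RtoC lam)%C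
       > Cmod (Lop gam del (t1 z) (t2 z) (t3 z) z)).

Definition bnd (gam del lam : R) (m : nat) : R :=
  4 * (gam - lam) / (INR m ^ 2 * (2 * gam + (del - gam) * (INR m - 1))).

Definition extremal_coeffs (gam del lam : R) (m : nat) : C :=
  match m with
  | 0%nat => 0%C
  | 1%nat => 1%C
  | _ => RtoC (bnd gam del lam m)
  end.

(* Main.v *)
Require Import Defs.
From Stdlib Require Import Reals Lra Lia ClassicalEpsilon.
From Coquelicot Require Import Coquelicot.
Open Scope R_scope.

Lemma pnC (z : C) n : pow_n (K:=C_AbsRing) z n = (z ^ n)%C.
Proof. reflexivity. Qed.

Ltac cs := rewrite ?pnC; unfold plus, opp, scal, mult, one, zero, minus; cbn -[INR Cpow];
  unfold plus, opp, scal, mult, one, zero, minus; cbn -[INR Cpow]; rewrite ?pnC;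
  repeat match goal with |- context [pow_n ?x ?n] => change (pow_n x n) with (Cpow x n) end.

Lemma partial_norm_le (u : nat -> C) (b : nat -> R) :
  (forall n, Cmod (u n) <= b n) ->
  forall N, Cmod (sum_n u N) <= sum_n b N.
Proof.
  intros H N. induction N.
  - rewrite !sum_O. apply H.
  - rewrite !sum_Sn. eapply Rle_trans. apply Cmod_triangle.
    change (plus (sum_n b N) (b (S N))) with (sum_n b N + b (S N)).
    specialize (H (S N)). lra.
Qed.

Lemma lim_norm (u : nat -> C) (L : C) :
  filterlim u eventually (locally L) ->
  is_lim_seq (fun n => Cmod (u n)) (Cmod L).
Proof.
  intros H. unfold is_lim_seq.
  apply (filterlim_comp _ _ _ u (fun x : C_NormedModule => norm x) _ _ _ H).
  exact (filterlim_norm (K:=C_AbsRing) (V:=C_NormedModule) L).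
Qed.

Lemma series_norm_le (u : nat -> C) (b : nat -> R) L B :
  is_series u L -> is_series b B -> (forall n, Cmod (u n) <= b n) -> Cmod L <= B.
Proof.
  intros HL HB Hb.
  assert (HB' : is_lim_seq (sum_n b) B) by (unfold is_lim_seq; exact HB).
  assert (H := is_lim_seq_le _ _ _ _ (partial_norm_le u b Hb) (lim_norm _ _ HL) HB').
  exact H.
Qed.

Lemma terms_bounded (u : nat -> C) L :
  is_series u L -> exists M, forall n, Cmod (u n) <= M.
Proof.
  intros H.
  destruct (filterlim_bounded (K:=C_AbsRing) (V:=C_NormedModule) (sum_n u)) as [M HM].
  { exists L. exact H. }
  exists (2 * M). intros n. destruct n.
  - assert (H0 := HM 0%nat). rewrite sum_O in H0.
    assert (0 <= M). { eapply Rle_trans. apply (norm_ge_0 (sum_n u 0)). apply HM. }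
    change (Cmod (u 0%nat) <= 2 * M). change (Cmod (u 0%nat) <= M) in H0. lra.
  - assert (E : u (S n) = (sum_n u (S n) - sum_n u n)%C).
    { rewrite sum_Sn. change (plus (sum_n u n) (u (S n))) with (sum_n u n + u (S n))%C. ring. }
    rewrite E. eapply Rle_trans. unfold Cminus. apply Cmod_triangle.
    rewrite Cmod_opp. assert (H1 := HM (S n)). assert (H2 := HM n).
    change (Cmod (sum_n u (S n)) <= M) in H1. change (Cmod (sum_n u n) <= M) in H2. lra.
Qed.

Definition cabs (a : nat -> C) (n : nat) : R := Cmod (a n).

Lemma radius (a : nat -> C) (s : C -> C) :
  (forall z, inU z -> is_pseries a z (s z)) ->
  forall rho, 0 <= rho < 1 -> Rbar_lt rho (CV_radius (cabs a)).
Proof.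
  intros HS rho Hr.
  set (x := (1 + rho) / 2).
  assert (Hx : inU (RtoC x)). { unfold inU. rewrite Cmod_R. unfold x. rewrite Rabs_pos_eq; lra. }
  destruct (terms_bounded _ _ (HS _ Hx)) as [M HM].
  assert (Hle : Rbar_le x (CV_radius (cabs a))).
  { destruct (CV_radius_bounded (cabs a)) as [Hub _]. apply Hub.
    exists M. intros n. specialize (HM n).
    change (Cmod (x ^ n * a n)%C <= M) in HM.
    rewrite Cmod_mult, Cmod_pow, Cmod_R, Rabs_pos_eq in HM by (unfold x; lra).
    unfold cabs. rewrite Rabs_pos_eq. lra.
    apply Rmult_le_pos. apply Cmod_ge_0. apply pow_le. unfold x; lra. }
  eapply Rbar_lt_le_trans; [| exact Hle]. simpl. unfold x. lra.
Qed.

Definition Ecoef (w z : C) (n : nat) : C :=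
  (w ^ (S n) - z ^ (S n) - RtoC (INR (S n)) * (w - z) * z ^ n)%C.

Lemma Ecoef_rec w z n :
  Ecoef w z (S n) = (w * Ecoef w z n + RtoC (INR (S n)) * ((w - z) * (w - z)) * z ^ n)%C.
Proof.
  unfold Ecoef. rewrite (S_INR (S n)). rewrite RtoC_plus. simpl Cpow. ring.
Qed.

Lemma Ecoef_0 w z : Ecoef w z 0 = 0%C.
Proof. unfold Ecoef. simpl Cpow. simpl INR. ring. Qed.

Lemma sqrt2_lt_2 : sqrt 2 < 2.
Proof.
  rewrite <- (sqrt_square 2) at 2 by lra.
  apply sqrt_lt_1; lra.
Qed.

Lemma Ecoef_bound (w z : C) (rho : R) :
  Cmod w <= rho -> Cmod z <= rho ->
  forall m, Cmod (Ecoef w z (S m)) <=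
     Cmod (w - z) ^ 2 * (INR (S m) * INR (S (S m)) / 2) * rho ^ m.
Proof.
  intros Hw Hz. assert (Hr : 0 <= rho) by (eapply Rle_trans; [apply Cmod_ge_0|exact Hz]).
  induction m.
  - rewrite Ecoef_rec, Ecoef_0. simpl INR. simpl Cpow.
    match goal with |- Cmod ?X <= _ => replace X with ((w - z) * (w - z))%C by ring end.
    rewrite Cmod_mult. simpl. lra.
  - rewrite Ecoef_rec. eapply Rle_trans. apply Cmod_triangle.
    rewrite !Cmod_mult, Cmod_R, Cmod_pow, Rabs_pos_eq by apply pos_INR.
    assert (h1 : Cmod w * Cmod (Ecoef w z (S m)) <= rho * (Cmod (w - z) ^ 2 * (INR (S m) * INR (S (S m)) / 2) * rho ^ m)).
    { apply Rmult_le_compat; auto using Cmod_ge_0. }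
    assert (h2 : Cmod z ^ S m <= rho ^ S m). { apply pow_incr. split; auto using Cmod_ge_0. }
    assert (h3 : 0 <= Cmod (w - z) * Cmod (w - z)) by (apply Rmult_le_pos; apply Cmod_ge_0).
    assert (h4 : INR (S (S m)) * (Cmod (w - z) * Cmod (w - z)) * Cmod z ^ S m <=
                 INR (S (S m)) * (Cmod (w - z) * Cmod (w - z)) * rho ^ S m).
    { apply Rmult_le_compat_l; auto. apply Rmult_le_pos; auto. apply pos_INR. }
    eapply Rle_trans. apply Rplus_le_compat; [exact h1 | exact h4].
    rewrite !S_INR. simpl pow. nra.
Qed.

Lemma series_ge0 (b : nat -> R) B : is_series b B -> (forall n, 0 <= b n) -> 0 <= B.
Proof.
  intros HB Hb.
  assert (HB' : is_lim_seq (sum_n b) B) by (unfold is_lim_seq; exact HB).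
  assert (Hp : forall N, 0 <= sum_n b N).
  { induction N. rewrite sum_O. apply Hb. rewrite sum_Sn.
    change (0 <= sum_n b N + b (S N)). specialize (Hb (S N)). lra. }
  exact (is_lim_seq_le _ _ _ _ Hp (is_lim_seq_const 0) HB').
Qed.

Lemma shift0 (f : nat -> C) L : is_series f L -> f 0%nat = 0%C -> is_series (fun k => f (S k)) L.
Proof.
  intros H H0. apply is_series_incr_1. rewrite H0.
  replace (plus L (RtoC 0)) with L; auto.
  change (L = (L + 0)%C). rewrite Cplus_0_r. reflexivity.
Qed.

Definition dC (a : nat -> C) (n : nat) : C := (RtoC (INR (S n)) * a (S n))%C.

Lemma cabs_dC a : forall n, cabs (dC a) n = PS_derive (cabs a) n.
Proof.
  intros n. unfold cabs, dC, PS_derive. rewrite Cmod_mult, Cmod_R, Rabs_pos_eq by apply pos_INR.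
  reflexivity.
Qed.

Lemma dC_ex (a : nat -> C) (s : C -> C) :
  (forall z, inU z -> is_pseries a z (s z)) ->
  forall z, inU z -> ex_series (fun n => scal (pow_n z n) (dC a n)).
Proof.
  intros HS z Hz.
  apply (ex_series_le (K:=C_AbsRing) (V:=C_CompleteNormedModule))
    with (b := fun n => Rabs (PS_derive (cabs a) n * Cmod z ^ n)).
  - intros n. change (Cmod (z ^ n * dC a n)%C <= Rabs (PS_derive (cabs a) n * Cmod z ^ n)).
    rewrite Cmod_mult, Cmod_pow. rewrite <- cabs_dC. unfold cabs.
    rewrite Rabs_pos_eq. lra. apply Rmult_le_pos. apply Cmod_ge_0. apply pow_le, Cmod_ge_0.
  - apply CV_disk_inside. rewrite CV_radius_derive. rewrite Rabs_pos_eq by apply Cmod_ge_0.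
    apply (radius a s HS). split. apply Cmod_ge_0. exact Hz.
Qed.

Lemma deriv_exists (a : nat -> C) (s : C -> C) :
  (forall z, inU z -> is_pseries a z (s z)) ->
  forall z, inU z -> exists D, is_pseries (dC a) z D /\ cderiv s z D.
Proof.
  intros HS z Hz.
  destruct (dC_ex a s HS z Hz) as [D HD].
  exists D. split. exact HD.
  set (rz := Cmod z). set (rho := (1 + rz)/2). set (d0 := (1 - rz)/2).
  assert (Hrz : 0 <= rz < 1). { split. apply Cmod_ge_0. exact Hz. }
  set (c := cabs a).
  set (mj := fun n => PS_derive (PS_derive c) n * rho ^ n).
  assert (Hmj0 : forall n, 0 <= mj n).
  { intros n. unfold mj, PS_derive, c, cabs. apply Rmult_le_pos.
    apply Rmult_le_pos. apply pos_INR. apply Rmult_le_pos. apply pos_INR. apply Cmod_ge_0.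
    apply pow_le. unfold rho; lra. }
  assert (Hmj : ex_series mj).
  { apply ex_series_ext with (a := fun n => Rabs (PS_derive (PS_derive c) n * rho ^ n)).
    intros n. apply Rabs_pos_eq. apply Hmj0.
    apply CV_disk_inside. rewrite !CV_radius_derive. rewrite Rabs_pos_eq by (unfold rho; lra).
    apply (radius a s HS). unfold rho; lra. }
  set (K := Series mj). assert (HK : is_series mj K) by (apply Series_correct; exact Hmj).
  assert (K0 : 0 <= K) by (apply (series_ge0 mj); auto).
  assert (Hest : forall w, Cmod (w - z) < d0 ->
            Cmod (s w - s z - (w - z) * D)%C <= K * Cmod (w - z) ^ 2).
  { intros w Hw.
    assert (Hzr : Cmod z <= rho) by (unfold rho; fold rz; lra).
    assert (Hwr : Cmod w <= rho).
    { replace w with (z + (w - z))%C by ring. eapply Rle_trans. apply Cmod_triangle.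
      unfold rho, d0 in *. fold rz. lra. }
    assert (Hwin : inU w) by (unfold inU; unfold rho in Hwr; lra).
    assert (H1 := is_series_minus _ _ _ _ (HS w Hwin) (HS z Hz)).
    assert (H3 := is_series_scal_l (K:=C_AbsRing) (V:=C_NormedModule) (w - z)%C _ _ HD).
    assert (H4 := is_series_minus _ _ _ _ (shift0 _ _ H1 ltac:(cs; ring)) H3).
    assert (H5 := shift0 _ _ H4 ltac:(unfold dC; cs; simpl Cpow; simpl INR; ring)).
    set (L := plus (plus (s w) (opp (s z))) (opp (scal (w - z)%C D))) in H5.
    assert (HL : L = (s w - s z - (w - z) * D)%C) by reflexivity.
    rewrite <- HL.
    assert (Hb : is_series (fun n => Cmod (w - z) ^ 2 * mj n) (Cmod (w - z) ^ 2 * K)).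
    { apply (is_series_scal_l (K:=R_AbsRing) (V:=R_NormedModule)). exact HK. }
    replace (K * Cmod (w - z) ^ 2) with (Cmod (w - z) ^ 2 * K) by ring.
    apply (series_norm_le _ _ _ _ H5 Hb).
    intros m.
    match goal with |- Cmod ?X <= _ => replace X with (a (S (S m)) * Ecoef w z (S m))%C end.
    2:{ unfold Ecoef, dC. cs. simpl Cpow. ring. }
    rewrite Cmod_mult.
    assert (HE := Ecoef_bound w z rho Hwr Hzr m).
    assert (Hc0 : 0 <= Cmod (a (S (S m)))) by apply Cmod_ge_0.
    eapply Rle_trans. apply Rmult_le_compat_l. exact Hc0. exact HE.
    unfold mj, PS_derive, c, cabs.
    assert (0 <= Cmod (w - z) ^ 2) by (apply pow2_ge_0).
    assert (0 <= INR (S m) * INR (S (S m))) by (apply Rmult_le_pos; apply pos_INR).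
    assert (0 <= rho ^ m) by (apply pow_le; unfold rho; lra).
    assert (0 <= Cmod (a (S (S m))) * (Cmod (w - z) ^ 2 * (INR (S m) * INR (S (S m)))) * rho ^ m).
    { apply Rmult_le_pos; auto. apply Rmult_le_pos; auto. apply Rmult_le_pos; auto. }
    nra. }
  split. apply is_linear_scal_l.
  intros x Hx. apply (is_filter_lim_locally_unique (K:=C_AbsRing) (V:=AbsRing_NormedModule C_AbsRing)) in Hx. subst x.
  intros eps.
  assert (Hd : 0 < Rmin d0 (eps / (K + 1)) / 2).
  { assert (0 < eps / (K + 1)). { apply Rdiv_lt_0_compat. apply cond_pos. lra. }
    assert (0 < d0) by (unfold d0; lra).
    apply Rmin_case; lra. }
  exists (mkposreal _ Hd). intros y Hy.
  assert (Hs2 := sqrt2_lt_2).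
  assert (Hm1 := Rmin_l d0 (eps / (K + 1))). assert (Hm2 := Rmin_r d0 (eps / (K + 1))).
  change (Cmod (s y - s z - (y - z) * D)%C <= eps * Cmod (y - z)).
  change (Cmod (y - z) < (Rmin d0 (eps / (K + 1)) / 2)) in Hy.
  assert (Hyd : Cmod (y - z) < Rmin d0 (eps / (K + 1))).
  { assert (0 <= Cmod (y - z)) by apply Cmod_ge_0. nra. }
  eapply Rle_trans. apply Hest. lra.
  assert (Hye : Cmod (y - z) <= eps / (K + 1)) by lra.
  assert (HKe : K * Cmod (y - z) <= eps).
  { apply Rle_trans with (K * (eps / (K + 1))). apply Rmult_le_compat_l; lra.
    unfold Rdiv. assert (0 < eps) by apply cond_pos.
    apply Rle_trans with ((K + 1) * (eps * / (K + 1))). nra. right. field. lra. }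
  assert (0 <= Cmod (y - z)) by apply Cmod_ge_0.
  simpl. nra.
Qed.

Lemma deriv_series (a : nat -> C) (s s1 : C -> C) :
  (forall z, inU z -> is_pseries a z (s z)) ->
  (forall z, inU z -> cderiv s z (s1 z)) ->
  forall z, inU z -> is_pseries (dC a) z (s1 z).
Proof.
  intros HS HD z Hz.
  destruct (deriv_exists a s HS z Hz) as [D [H1 H2]].
  replace (s1 z) with D. exact H1.
  apply is_C_derive_unique in H2. specialize (HD z Hz). apply is_C_derive_unique in HD.
  congruence.
Qed.


Fixpoint fsum (f : nat -> C) (N : nat) : C :=
  match N with O => 0%C | S n => (fsum f n + f n)%C end.
Fixpoint fsumR (f : nat -> R) (N : nat) : R :=
  match N with O => 0 | S n => fsumR f n + f n end.

Lemma fsum_ext (f g : nat -> C) N : (forall j, (j < N)%nat -> f j = g j) -> fsum f N = fsum g N.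
Proof. induction N; intros H; simpl; auto. rewrite IHN by (intros; apply H; lia). rewrite H by lia. auto. Qed.

Lemma fsumR_ext f g N : (forall j, (j < N)%nat -> f j = g j) -> fsumR f N = fsumR g N.
Proof. induction N; intros H; simpl; auto. rewrite IHN by (intros; apply H; lia). rewrite H by lia. auto. Qed.

Lemma fsum_plus (f g : nat -> C) N : fsum (fun j => f j + g j)%C N = (fsum f N + fsum g N)%C.
Proof. induction N; simpl. ring. rewrite IHN. ring. Qed.

Lemma fsum_mult_l (c : C) (f : nat -> C) N : fsum (fun j => c * f j)%C N = (c * fsum f N)%C.
Proof. induction N; simpl. ring. rewrite IHN. ring. Qed.

Lemma fsum_mult_r (c : C) (f : nat -> C) N : fsum (fun j => f j * c)%C N = (fsum f N * c)%C.
Proof. induction N; simpl. ring. rewrite IHN. ring. Qed.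

Lemma fsum_conj (f : nat -> C) N : Cconj (fsum f N) = fsum (fun j => Cconj (f j)) N.
Proof. induction N; simpl. apply injective_projections; simpl; lra. rewrite Cplus_conj, IHN. auto. Qed.

Lemma fsum_switch (u : nat -> nat -> C) N M :
  fsum (fun j => fsum (fun n => u j n) M) N = fsum (fun n => fsum (fun j => u j n) N) M.
Proof.
  induction N; simpl.
  - induction M; simpl; auto. rewrite <- IHM. ring.
  - rewrite IHN. rewrite <- fsum_plus. apply fsum_ext. intros. simpl. auto.
Qed.

Lemma fsum_Cmod (f : nat -> C) N : Cmod (fsum f N) <= fsumR (fun j => Cmod (f j)) N.
Proof.
  induction N; simpl. rewrite Cmod_0. lra.
  eapply Rle_trans. apply Cmod_triangle. lra.
Qed.

Lemma fsum_RtoC v N : fsum (fun j => RtoC (v j)) N = RtoC (fsumR v N).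
Proof. induction N; simpl; auto. rewrite IHN, RtoC_plus. auto. Qed.

Lemma fsum_Re (f : nat -> C) N : Re (fsum f N) = fsumR (fun j => Re (f j)) N.
Proof. induction N; simpl; auto. rewrite <- IHN. auto. Qed.

Lemma fsumR_const c N : fsumR (fun _ => c) N = INR N * c.
Proof. induction N; simpl fsumR. simpl; ring. rewrite IHN, S_INR. ring. Qed.

Lemma fsumR_plus f g N : fsumR (fun j => f j + g j) N = fsumR f N + fsumR g N.
Proof. induction N; simpl. ring. rewrite IHN. ring. Qed.

Lemma fsumR_scal c f N : fsumR (fun j => c * f j) N = c * fsumR f N.
Proof. induction N; simpl. ring. rewrite IHN. ring. Qed.

Lemma fsum_geom (q : C) N : ((q - 1) * fsum (fun j => q ^ j) N = q ^ N - 1)%C.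
Proof. induction N; simpl. ring. rewrite Cmult_plus_distr_l, IHN. ring. Qed.

Lemma fsum_zero (f : nat -> C) N : (forall j, (j < N)%nat -> f j = 0%C) -> fsum f N = 0%C.
Proof. intros H. rewrite (fsum_ext f (fun _ => 0%C) N H). clear H. induction N.
  reflexivity. simpl. rewrite IHN. ring. Qed.

Lemma fsum_single (f : nat -> C) N k : (k < N)%nat -> (forall j, (j < N)%nat -> j <> k -> f j = 0%C) -> fsum f N = f k.
Proof.
  induction N; intros Hk H. lia.
  simpl. destruct (Nat.eq_dec k N).
  - subst. rewrite fsum_zero. ring. intros. apply H; lia.
  - rewrite IHN by (try lia; intros; apply H; lia). rewrite (H N) by lia. ring.
Qed.

Lemma sum_n_fsum (f : nat -> C) M : sum_n f M = fsum f (S M).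
Proof. induction M. rewrite sum_O. simpl. change (f 0%nat = 0 + f 0%nat)%C. ring.
  rewrite sum_Sn, IHM. reflexivity. Qed.

Lemma fsum_const1 N : fsum (fun _ => 1%C) N = RtoC (INR N).
Proof. induction N; simpl fsum. auto. rewrite IHN, S_INR, RtoC_plus. auto. Qed.


Definition om (N : nat) : C := (cos (2 * PI / INR N), sin (2 * PI / INR N)).

Lemma om_pow N m : (om N ^ m)%C = (cos (2 * PI * INR m / INR N), sin (2 * PI * INR m / INR N)).
Proof.
  induction m.
  - simpl Cpow. simpl INR. replace (2 * PI * 0 / INR N) with 0 by (unfold Rdiv; ring).
    rewrite cos_0, sin_0. reflexivity.
  - rewrite Cpow_S, IHm. unfold om.
    replace (2 * PI * INR (S m) / INR N) with (2 * PI / INR N + 2 * PI * INR m / INR N)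
      by (rewrite S_INR; unfold Rdiv; ring).
    rewrite cos_plus, sin_plus. unfold Cmult. simpl. f_equal; ring.
Qed.

Lemma Cmod_om N : Cmod (om N) = 1.
Proof.
  unfold om, Cmod. cbn [fst snd]. rewrite <- sqrt_1. f_equal.
  assert (H := sin2_cos2 (2 * PI / INR N)). unfold Rsqr in H. simpl. nra.
Qed.

Lemma Cmod_om_pow N k : Cmod (om N ^ k) = 1.
Proof. rewrite Cmod_pow, Cmod_om. apply pow1. Qed.

Lemma om_N N : (0 < N)%nat -> (om N ^ N)%C = 1%C.
Proof.
  intros HN. rewrite om_pow.
  replace (2 * PI * INR N / INR N) with (2 * PI) by (field; apply not_0_INR; lia).
  rewrite cos_2PI, sin_2PI. reflexivity.
Qed.

Lemma om_ne1 N m : (0 < m < N)%nat -> (om N ^ m)%C <> 1%C.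
Proof.
  intros Hm E. rewrite om_pow in E.
  assert (Hc : cos (2 * PI * INR m / INR N) = 1) by (apply (f_equal fst) in E; simpl in E; exact E).
  assert (HN : 0 < INR N) by (apply lt_0_INR; lia).
  assert (Hm0 : 0 < INR m) by (apply lt_0_INR; lia).
  assert (HmN : INR m < INR N) by (apply lt_INR; lia).
  set (x := PI * INR m / INR N).
  assert (Hx1 : 0 < x). { unfold x. apply Rdiv_lt_0_compat; auto. apply Rmult_lt_0_compat; auto. apply PI_RGT_0. }
  assert (Hx2 : x < PI).
  { unfold x. apply Rmult_lt_reg_r with (INR N); auto. unfold Rdiv. rewrite Rmult_assoc, Rinv_l by lra.
    assert (PI > 0) by apply PI_RGT_0. nra. }
  replace (2 * PI * INR m / INR N) with (2 * x) in Hc by (unfold x, Rdiv; ring).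
  rewrite cos_2a_sin in Hc. assert (Hs := sin_gt_0 x Hx1 Hx2). nra.
Qed.

Lemma geom_zero (q : C) N : (q ^ N)%C = 1%C -> q <> 1%C -> fsum (fun j => q ^ j)%C N = 0%C.
Proof.
  intros H1 H2. assert (E := fsum_geom q N). rewrite H1 in E.
  assert (Hq : (q - 1)%C <> 0%C). { intros E'. apply H2. apply Ceq_minus. exact E'. }
  replace (fsum (fun j => q ^ j)%C N) with (/ (q - 1) * ((q - 1) * fsum (fun j => q ^ j)%C N))%C
    by (field; exact Hq).
  rewrite E. ring.
Qed.

Lemma unit_conj (u : C) : Cmod u = 1 -> (u * Cconj u)%C = 1%C.
Proof. intros H. rewrite <- Cmod2_conj, H. simpl. f_equal. ring. Qed.

Lemma pow_om_N N m : (0 < N)%nat -> ((om N ^ m) ^ N)%C = 1%C.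
Proof. intros HN. rewrite <- Cpow_mult_r, Nat.mul_comm, Cpow_mult_r, om_N by auto. apply Cpow_1_l. Qed.

Lemma Xsum N n k : (0 < N)%nat -> (n < N)%nat -> (k < N)%nat ->
  fsum (fun j => (om N ^ n) ^ j * Cconj ((om N ^ k) ^ j))%C N =
  if Nat.eq_dec n k then RtoC (INR N) else 0%C.
Proof.
  intros HN Hn Hk.
  rewrite (fsum_ext _ (fun j => (om N ^ n * Cconj (om N ^ k)) ^ j)%C)
    by (intros; rewrite Cpow_conj, <- Cpow_mult_l; reflexivity).
  destruct (Nat.eq_dec n k).
  - subst. rewrite unit_conj by apply Cmod_om_pow.
    rewrite (fsum_ext _ (fun _ => 1%C)) by (intros; apply Cpow_1_l). apply fsum_const1.
  - assert (Hne : (n < k \/ k < n)%nat) by lia. destruct Hne as [Hlt | Hgt].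
    + replace (om N ^ k)%C with (om N ^ (k - n) * om N ^ n)%C
        by (rewrite <- Cpow_add_r; f_equal; lia).
      replace (om N ^ n * Cconj (om N ^ (k - n) * om N ^ n))%C with
        (Cconj (om N ^ (k - n)) * (om N ^ n * Cconj (om N ^ n)))%C
        by (rewrite Cmult_conj; ring).
      rewrite unit_conj by apply Cmod_om_pow. rewrite Cmult_1_r.
      apply geom_zero.
      * rewrite <- Cpow_conj, pow_om_N by auto.
        apply injective_projections; simpl; lra.
      * intros E. apply (om_ne1 N (k - n)). lia.
        rewrite <- (Cconj_conj (om N ^ (k - n))), E. apply injective_projections; simpl; lra.
    + replace (om N ^ n)%C with (om N ^ (n - k) * om N ^ k)%C
        by (rewrite <- Cpow_add_r; f_equal; lia).
      replace (om N ^ (n - k) * om N ^ k * Cconj (om N ^ k))%C with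
        (om N ^ (n - k) * (om N ^ k * Cconj (om N ^ k)))%C by ring.
      rewrite unit_conj by apply Cmod_om_pow. rewrite Cmult_1_r.
      apply geom_zero. apply pow_om_N; auto. apply om_ne1. lia.
Qed.

Lemma Ysum N n k : (0 < n + k < N)%nat ->
  fsum (fun j => (om N ^ n) ^ j * (om N ^ k) ^ j)%C N = 0%C.
Proof.
  intros H.
  rewrite (fsum_ext _ (fun j => (om N ^ (n + k)) ^ j)%C)
    by (intros; rewrite Cpow_add_r, Cpow_mult_l; reflexivity).
  apply geom_zero. apply pow_om_N; lia. apply om_ne1. lia.
Qed.


Lemma weights (p : nat -> C) (r : R) (N M : nat) (g : nat -> C) :
  fsum (fun j => fsum (fun n => p n * (RtoC r * om N ^ j) ^ n)%C M * g j)%C N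
  = fsum (fun n => p n * RtoC r ^ n * fsum (fun j => (om N ^ n) ^ j * g j)%C N)%C M.
Proof.
  rewrite (fsum_ext _ (fun j => fsum (fun n => p n * (RtoC r * om N ^ j) ^ n * g j)%C M))
    by (intros; rewrite <- fsum_mult_r; reflexivity).
  rewrite fsum_switch. apply fsum_ext. intros n _. rewrite <- fsum_mult_l. apply fsum_ext.
  intros j _. rewrite Cpow_mult_l, <- Cpow_mult_r, Nat.mul_comm, Cpow_mult_r. ring.
Qed.

Lemma re_minus (a b : C) : Re (a - b)%C = Re a - Re b.
Proof. destruct a, b. simpl. ring. Qed.

Lemma re_twice (c : C) (t : R) : RtoC (2 * (Re c + t)) = (c + Cconj c + RtoC (2 * t))%C.
Proof. destruct c as [x y]. apply injective_projections; simpl; ring. Qed.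

Lemma carath_fin (p : nat -> C) (H : C -> C) (lam T r : R) (Mx k : nat) :
  0 < r < 1 -> (1 <= k <= Mx)%nat ->
  (forall z, Cmod z = r -> lam < Re (H z)) ->
  (forall z, Cmod z = r -> Cmod (H z - fsum (fun n => p n * z ^ n)%C (S Mx)) <= T) ->
  Cmod (p k) * r ^ k <= 2 * (Re (p 0%nat) - lam + T).
Proof.
  intros Hr Hk HH HT.
  set (N := (Mx + k + 1)%nat).
  assert (HN : (0 < N)%nat) by (unfold N; lia).
  set (z := fun j => (RtoC r * om N ^ j)%C).
  assert (Hz : forall j, Cmod (z j) = r).
  { intros j. unfold z. rewrite Cmod_mult, Cmod_R, Cmod_om_pow, Rabs_pos_eq by lra. ring. }
  set (P := fun w => fsum (fun n => p n * w ^ n)%C (S Mx)).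
  set (v := fun j => 2 * (Re (P (z j)) + (T - lam))).
  assert (Hv : forall j, 0 <= v j).
  { intros j. unfold v. specialize (HH _ (Hz j)). specialize (HT _ (Hz j)).
    assert (E : Re (H (z j) - P (z j))%C = Re (H (z j)) - Re (P (z j))) by apply re_minus.
    fold (P (z j)) in HT.
    assert (Rabs (Re (H (z j)) - Re (P (z j))) <= T).
    { rewrite <- E. eapply Rle_trans; [apply re_le_Cmod|]. exact HT. }
    apply Rabs_le_between in H0. lra. }
  set (g1 := fun j => Cconj ((om N ^ k) ^ j)%C).
  set (A := fsum (fun j => RtoC (v j) * g1 j)%C N).
  assert (HA1 : Cmod A <= fsumR v N).
  { unfold A. eapply Rle_trans. apply fsum_Cmod. right. apply fsumR_ext. intros j _.
    unfold g1. rewrite Cmod_mult, Cmod_conj, Cmod_R, Cmod_pow, Cmod_om_pow, pow1, Rabs_pos_eq by apply Hv. ring. }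
  assert (T1 : fsum (fun j => P (z j) * g1 j)%C N = (p k * RtoC r ^ k * RtoC (INR N))%C).
  { unfold P, z. rewrite weights. unfold g1.
    rewrite (fsum_single _ (S Mx) k) by (first [lia | intros n Hn Hne; rewrite Xsum by (unfold N; lia);
      destruct (Nat.eq_dec n k); [lia | ring]]).
    rewrite Xsum by (unfold N; lia). destruct (Nat.eq_dec k k); [|lia]. reflexivity. }
  assert (T2 : fsum (fun j => Cconj (P (z j)) * g1 j)%C N = 0%C).
  { unfold g1. rewrite (fsum_ext _ (fun j => Cconj (P (z j) * (om N ^ k) ^ j))%C)
      by (intros; rewrite Cmult_conj; reflexivity).
    rewrite <- fsum_conj. unfold P, z. rewrite weights.
    rewrite fsum_zero. apply injective_projections; simpl; lra.
    intros n Hn. rewrite Ysum by (unfold N; lia). ring. }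
  assert (T3 : fsum g1 N = 0%C).
  { unfold g1. rewrite <- fsum_conj. rewrite geom_zero. apply injective_projections; simpl; lra.
    apply pow_om_N; auto. apply om_ne1. unfold N; lia. }
  assert (HA2 : A = (p k * RtoC r ^ k * RtoC (INR N))%C).
  { unfold A, v. rewrite (fsum_ext _ (fun j => (P (z j) * g1 j + Cconj (P (z j)) * g1 j + RtoC (2 * (T - lam)) * g1 j))%C)
      by (intros; rewrite re_twice; ring).
    rewrite !fsum_plus, fsum_mult_l, T1, T2, T3. ring. }
  assert (T0 : fsum (fun j => P (z j)) N = (p 0%nat * RtoC (INR N))%C).
  { rewrite (fsum_ext _ (fun j => P (z j) * Cconj ((om N ^ 0) ^ j))%C).
    2:{ intros j _. simpl Cpow. rewrite Cpow_1_l. destruct (P (z j)) as [x y]. apply injective_projections; simpl; ring. }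
    unfold P, z. rewrite weights.
    rewrite (fsum_single _ (S Mx) 0) by (first [lia | intros n Hn Hne; rewrite Xsum by (unfold N; lia);
      destruct (Nat.eq_dec n 0); [lia | ring]]).
    rewrite Xsum by (unfold N; lia). destruct (Nat.eq_dec 0 0); [|lia]. simpl Cpow. ring. }
  assert (HB : fsumR v N = INR N * (2 * (Re (p 0%nat) + (T - lam)))).
  { unfold v. rewrite fsumR_scal, fsumR_plus, fsumR_const.
    rewrite <- (fsum_Re (fun j => P (z j))), T0, re_scal_r. ring. }
  rewrite HA2, HB in *. rewrite !Cmod_mult, Cmod_pow, !Cmod_R in HA1.
  rewrite (Rabs_pos_eq r), (Rabs_pos_eq (INR N)) in HA1 by (try apply pos_INR; lra).
  assert (0 < INR N) by (apply lt_0_INR; auto).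
  apply Rmult_le_reg_r with (INR N); auto. nra.
Qed.


Lemma bernoulli (r : R) (k : nat) : 0 <= r <= 1 -> 1 - INR k * (1 - r) <= r ^ k.
Proof.
  intros Hr. induction k. simpl. lra.
  rewrite S_INR. simpl pow.
  assert (0 <= INR k) by apply pos_INR.
  assert (r * (1 - INR k * (1 - r)) <= r * r ^ k) by (apply Rmult_le_compat_l; lra).
  assert (0 <= INR k * ((1 - r) * (1 - r))) by (apply Rmult_le_pos; nra). nra.
Qed.

Lemma carath_r (p : nat -> C) (H : C -> C) (lam : R) :
  (forall z, inU z -> is_pseries p z (H z)) ->
  (forall z, inU z -> lam < Re (H z)) ->
  forall k, (1 <= k)%nat -> forall r, 0 < r < 1 ->
  Cmod (p k) * r ^ k <= 2 * (Re (p 0%nat) - lam).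
Proof.
  intros HS HH k Hk r Hr.
  set (c := fun n => Cmod (p n) * r ^ n).
  assert (Hc : ex_series c).
  { apply ex_series_ext with (a := fun n => Rabs (cabs p n * r ^ n)).
    intros n. unfold c, cabs. apply Rabs_pos_eq. apply Rmult_le_pos. apply Cmod_ge_0. apply pow_le; lra.
    apply CV_disk_inside. rewrite Rabs_pos_eq by lra. apply (radius p H HS). lra. }
  set (Sc := Series c). assert (HSc : is_series c Sc) by (apply Series_correct; exact Hc).
  apply Rnot_lt_le. intros Hlt.
  set (eps := (Cmod (p k) * r ^ k - 2 * (Re (p 0%nat) - lam)) / 4).
  assert (Heps : 0 < eps) by (unfold eps; lra).
  assert (HL : is_lim_seq (sum_n c) Sc) by (unfold is_lim_seq; exact HSc).
  apply is_lim_seq_spec in HL. destruct (HL (mkposreal _ Heps)) as [M0 HM0].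
  set (Mx := (M0 + k)%nat).
  assert (HMx := HM0 Mx ltac:(unfold Mx; lia)). simpl in HMx.
  set (T := Sc - sum_n c Mx).
  assert (HT : forall z, Cmod z = r -> Cmod (H z - fsum (fun n => p n * z ^ n)%C (S Mx)) <= T).
  { intros z Hz.
    assert (Hzin : inU z) by (unfold inU; lra).
    assert (E1 : sum_n (fun n => scal (pow_n z n) (p n)) Mx = fsum (fun n => p n * z ^ n)%C (S Mx)).
    { rewrite sum_n_fsum. apply fsum_ext. intros j _. cs. ring. }
    assert (H1 : is_series (fun j => scal (pow_n z (S Mx + j)%nat) (p (S Mx + j)%nat)) (H z - fsum (fun n => p n * z ^ n)%C (S Mx))%C).
    { assert (H0 : is_series (fun n => scal (pow_n z n) (p n))
         (plus (H z - fsum (fun n => p n * z ^ n)%C (S Mx))%C (sum_n (fun n => scal (pow_n z n) (p n)) (pred (S Mx))))).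
      { replace (plus (H z - fsum (fun n => p n * z ^ n)%C (S Mx))%C (sum_n (fun n => scal (pow_n z n) (p n)) (pred (S Mx))))
          with (H z). apply HS; auto.
        simpl pred. rewrite E1. cs. ring. }
      exact (is_series_incr_n _ (S Mx) _ ltac:(lia) H0). }
    assert (H2 : is_series (fun j => c (S Mx + j)%nat) T).
    { apply (is_series_incr_n c (S Mx)). lia. simpl pred. unfold T.
      match goal with |- is_series _ ?X => replace X with Sc end. exact HSc.
      change (Sc = Sc - sum_n c Mx + sum_n c Mx). ring. }
    apply (series_norm_le _ _ _ _ H1 H2).
    intros j. unfold c. cs. rewrite Cmod_mult, Cmod_pow, Hz. simpl pow. lra. }
  assert (HT2 : T <= eps).
  { unfold T. apply Rabs_lt_between in HMx. lra. }
  assert (HF := carath_fin p H lam T r Mx k Hr ltac:(unfold Mx; lia)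
                  (fun z Hz => HH z ltac:(unfold inU; lra)) HT).
  unfold eps in HT2. lra.
Qed.

Lemma carath (p : nat -> C) (H : C -> C) (lam : R) :
  (forall z, inU z -> is_pseries p z (H z)) ->
  (forall z, inU z -> lam < Re (H z)) ->
  forall k, (1 <= k)%nat -> Cmod (p k) <= 2 * (Re (p 0%nat) - lam).
Proof.
  intros HS HH k Hk.
  assert (Hr := carath_r p H lam HS HH k Hk).
  set (X := Cmod (p k)). set (Y := 2 * (Re (p 0%nat) - lam)). fold X Y in Hr.
  assert (HX : 0 <= X) by apply Cmod_ge_0.
  assert (HY : 0 <= Y).
  { specialize (Hr (1/2) ltac:(lra)). assert (0 <= (1/2) ^ k) by (apply pow_le; lra). nra. }
  apply Rnot_lt_le. intros Hlt.
  assert (Hk0 : 1 <= INR k) by (apply (le_INR 1); lia).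
  set (r := 1 - (X - Y) / (2 * INR k * X)).
  assert (HXp : 0 < X) by lra.
  assert (Hq : 0 < (X - Y) / (2 * INR k * X) <= 1/2).
  { split. apply Rdiv_lt_0_compat; nra.
    apply Rmult_le_reg_r with (2 * INR k * X). nra. unfold Rdiv. rewrite Rmult_assoc, Rinv_l by nra. nra. }
  specialize (Hr r ltac:(unfold r; lra)).
  assert (Hb := bernoulli r k ltac:(unfold r; lra)).
  assert (E : INR k * (1 - r) = (X - Y) / (2 * X)).
  { unfold r. field. split; lra. }
  assert (E2 : X * ((X - Y) / (2 * X)) = (X - Y) / 2) by (field; lra).
  assert (X * (1 - INR k * (1 - r)) <= X * r ^ k) by (apply Rmult_le_compat_l; lra).
  rewrite E in H0. nra.
Qed.


Definition LopC (gam del : R) (a : nat -> C) (n : nat) : C :=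
  (RtoC (INR (S n) * (gam + del * INR n + ((del - gam) / 2) * INR n * (INR n - 1))) * a (S n))%C.

Lemma Lop_series gam del (a : nat -> C) (s1 s2 s3 : C -> C) z :
  is_pseries (dC a) z (s1 z) -> is_pseries (dC (dC a)) z (s2 z) ->
  is_pseries (dC (dC (dC a))) z (s3 z) ->
  is_pseries (LopC gam del a) z (Lop gam del (s1 z) (s2 z) (s3 z) z).
Proof.
  intros H1 H2 H3.
  assert (Hc : forall c : C, mult z c = mult c z) by (intros; apply Cmult_comm).
  assert (G1 := is_pseries_scal (RtoC gam) _ _ _ (Hc _) H1).
  assert (G2 := is_pseries_scal (RtoC del) _ _ _ (Hc _) (is_pseries_incr_1 _ _ _ H2)).
  assert (G3 := is_pseries_scal (RtoC ((del - gam) / 2)) _ _ _ (Hc _)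
                  (is_pseries_incr_1 _ _ _ (is_pseries_incr_1 _ _ _ H3))).
  assert (G := is_pseries_plus _ _ _ _ _ (is_pseries_plus _ _ _ _ _ G1 G2) G3).
  eapply is_pseries_ext; [| eapply (is_pseries_ext _ _ _ _ (fun n => eq_refl)) ].
  2:{ match goal with |- is_pseries _ _ ?X => replace X with
        (plus (plus (scal (RtoC gam) (s1 z)) (scal (RtoC del) (scal z (s2 z))))
              (scal (RtoC ((del - gam) / 2)) (scal z (scal z (s3 z))))) end.
      exact G. unfold Lop. cs. ring. }
  intros n. unfold PS_plus, PS_scal, PS_incr_1, LopC, dC.
  destruct n as [|[|n]]; cs.
  - destruct (a 1%nat) as [x y]. apply injective_projections; simpl; ring.
  - destruct (a 2%nat) as [x y]. apply injective_projections; simpl; ring.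
  - rewrite !S_INR. destruct (a (S (S (S n)))) as [x y].
    apply injective_projections; simpl; ring.
Qed.

Lemma choose_eps (a b : C) : exists eps : C, Cmod eps = 1 /\ Cmod (a + eps * b)%C = Cmod a + Cmod b.
Proof.
  destruct (Req_dec (Cmod b) 0) as [Hb | Hb].
  { exists 1%C. split. apply Cmod_1. apply Cmod_eq_0 in Hb. subst b.
    rewrite Cmult_0_r, Cplus_0_r, Cmod_0. ring. }
  destruct (Req_dec (Cmod a) 0) as [Ha | Ha].
  { exists 1%C. split. apply Cmod_1. apply Cmod_eq_0 in Ha. subst a.
    rewrite Cmult_1_l, Cplus_0_l, Cmod_0. ring. }
  assert (Ha' : 0 < Cmod a) by (assert (H := Cmod_ge_0 a); lra).
  assert (Hb' : 0 < Cmod b) by (assert (H := Cmod_ge_0 b); lra).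
  exists (a * Cconj b * RtoC (/ (Cmod a * Cmod b)))%C. split.
  - rewrite !Cmod_mult, Cmod_conj, Cmod_R, Rabs_pos_eq.
    field. split; lra. apply Rlt_le, Rinv_0_lt_compat. nra.
  - assert (E : (a + a * Cconj b * RtoC (/ (Cmod a * Cmod b)) * b)%C = (a * RtoC (1 + Cmod b / Cmod a))%C).
    { replace (a * Cconj b * RtoC (/ (Cmod a * Cmod b)) * b)%C with
        (a * (b * Cconj b) * RtoC (/ (Cmod a * Cmod b)))%C by ring.
      rewrite <- Cmod2_conj, <- Cmult_assoc, <- RtoC_mult.
      replace (Cmod b ^ 2 * / (Cmod a * Cmod b)) with (Cmod b / Cmod a) by (field; split; lra).
      rewrite RtoC_plus. ring. }
    rewrite E, Cmod_mult, Cmod_R, Rabs_pos_eq. field. lra.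
    assert (0 <= Cmod b / Cmod a) by (apply Rdiv_le_0_compat; lra). lra.
Qed.

Lemma re_plus (a b : C) : Re (a + b)%C = Re a + Re b.
Proof. destruct a, b. simpl. ring. Qed.

Lemma coef_bound (gam del lam : R) (a b : nat -> C) (s t : C -> C) (eps : C) :
  0 <= lam -> lam < gam -> gam <= del ->
  H0_coeffs a b -> has_series a s -> has_series b t -> in_RH0 gam del lam s t ->
  Cmod eps = 1 ->
  forall m, (2 <= m)%nat -> Cmod (a m + eps * b m)%C <= bnd gam del lam m.
Proof.
  intros Hl Hlg Hgd [Ha0 [Ha1 [Hb0 Hb1]]] HSa HSb [s1 [s2 [s3 [t1 [t2 [t3 [Hd Hpos]]]]]]] Heps m Hm.
  assert (Hs1 := deriv_series a s s1 HSa (fun z hz => proj1 (Hd z hz))).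
  assert (Hs2 := deriv_series (dC a) s1 s2 Hs1 (fun z hz => proj1 (proj2 (Hd z hz)))).
  assert (Hs3 := deriv_series (dC (dC a)) s2 s3 Hs2 (fun z hz => proj1 (proj2 (proj2 (Hd z hz))))).
  assert (Ht1 := deriv_series b t t1 HSb (fun z hz => proj1 (proj2 (proj2 (proj2 (Hd z hz)))))).
  assert (Ht2 := deriv_series (dC b) t1 t2 Ht1 (fun z hz => proj1 (proj2 (proj2 (proj2 (proj2 (Hd z hz))))))).
  assert (Ht3 := deriv_series (dC (dC b)) t2 t3 Ht2 (fun z hz => proj2 (proj2 (proj2 (proj2 (proj2 (Hd z hz))))))).
  set (H := fun z => (Lop gam del (s1 z) (s2 z) (s3 z) z + eps * Lop gam del (t1 z) (t2 z) (t3 z) z)%C).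
  set (p := PS_plus (LopC gam del a) (PS_scal eps (LopC gam del b))).
  assert (HP : forall z, inU z -> is_pseries p z (H z)).
  { intros z hz.
    assert (G := is_pseries_plus _ _ _ _ _ (Lop_series gam del a s1 s2 s3 z (Hs1 z hz) (Hs2 z hz) (Hs3 z hz))
       (is_pseries_scal eps _ _ _ (Cmult_comm _ _) (Lop_series gam del b t1 t2 t3 z (Ht1 z hz) (Ht2 z hz) (Ht3 z hz)))).
    exact G. }
  assert (HH : forall z, inU z -> lam < Re (H z)).
  { intros z hz. specialize (Hpos z hz). unfold H. rewrite re_plus.
    rewrite re_minus in Hpos. rewrite re_RtoC in Hpos.
    assert (Hr := re_le_Cmod (eps * Lop gam del (t1 z) (t2 z) (t3 z) z)%C).
    rewrite Cmod_mult, Heps in Hr. apply Rabs_le_between in Hr. lra. }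
  destruct m as [|k]. lia.
  assert (Hk : (1 <= k)%nat) by lia.
  assert (HC := carath p H lam HP HH k Hk).
  assert (Hp0 : p 0%nat = RtoC gam).
  { unfold p, PS_plus, PS_scal, LopC. rewrite Ha1, Hb1. cs. simpl INR.
    apply injective_projections; simpl; ring. }
  rewrite Hp0, re_RtoC in HC.
  set (X := INR (S k) * (gam + del * INR k + ((del - gam) / 2) * INR k * (INR k - 1))).
  assert (Hpk : p k = (RtoC X * (a (S k) + eps * b (S k)))%C).
  { unfold p, PS_plus, PS_scal, LopC, X. cs. ring. }
  assert (Hk0 : 1 <= INR k) by (apply (le_INR 1); lia).
  assert (HXe : X = INR (S k) ^ 2 * (2 * gam + (del - gam) * (INR (S k) - 1)) / 2).
  { unfold X. rewrite S_INR. field. }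
  assert (HX : 0 < X).
  { rewrite HXe. rewrite S_INR. assert (0 < (INR k + 1) ^ 2) by (apply pow_lt; lra).
    assert (0 < 2 * gam + (del - gam) * (INR k + 1 - 1)) by nra. 
    apply Rdiv_lt_0_compat; nra. }
  rewrite Hpk, Cmod_mult, Cmod_R, Rabs_pos_eq in HC by lra.
  unfold bnd. rewrite HXe in HC.
  set (D := INR (S k) ^ 2 * (2 * gam + (del - gam) * (INR (S k) - 1))) in *.
  assert (HD : 0 < D) by lra.
  apply Rmult_le_reg_r with (D / 2). lra.
  replace (4 * (gam - lam) / D * (D / 2)) with (2 * (gam - lam)) by (field; lra).
  lra.
Qed.

Theorem part1 (gam del lam : R) :
  0 <= lam -> lam < gam -> gam <= del ->
  (forall (a b : nat -> C) (s t : C -> C),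
     H0_coeffs a b -> has_series a s -> has_series b t ->
     in_RH0 gam del lam s t ->
     forall m : nat, (2 <= m)%nat ->
       Cmod (a m) + Cmod (b m) <= bnd gam del lam m /\
       Rabs (Cmod (a m) - Cmod (b m)) <= bnd gam del lam m /\
       Cmod (a m) <= bnd gam del lam m).
Proof.
  intros Hl Hlg Hgd a b s t H0 HSa HSb HR m Hm.
  destruct (choose_eps (a m) (b m)) as [eps [He1 He2]].
  assert (HB := coef_bound gam del lam a b s t eps Hl Hlg Hgd H0 HSa HSb HR He1 m Hm).
  rewrite He2 in HB.
  assert (0 <= Cmod (a m)) by apply Cmod_ge_0. assert (0 <= Cmod (b m)) by apply Cmod_ge_0.
  split; [lra | split; [| lra]].
  apply Rabs_le. split; lra.
Qed.


Definition Ssum (a : nat -> C) (z : C) : C := @epsilon C (inhabits (RtoC 0)) (fun l : C => is_pseries a z l).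

Lemma pseries_unique (a : nat -> C) (z l1 l2 : C) : is_pseries a z l1 -> is_pseries a z l2 -> l1 = l2.
Proof.
  intros H1 H2. exact (filterlim_locally_unique (K:=C_AbsRing) (V:=C_NormedModule) _ _ _ H1 H2).
Qed.

Lemma S_deriv (a : nat -> C) : has_series a (Ssum a) ->
  has_series (dC a) (Ssum (dC a)) /\ forall z, inU z -> cderiv (Ssum a) z (Ssum (dC a) z).
Proof.
  intros HS.
  assert (HD := deriv_exists a (Ssum a) HS).
  assert (H1 : has_series (dC a) (Ssum (dC a))).
  { intros z hz. destruct (HD z hz) as [D [HD1 _]]. unfold Ssum. apply epsilon_spec. exists D. exact HD1. }
  split. exact H1.
  intros z hz. destruct (HD z hz) as [D [HD1 HD2]].
  replace (Ssum (dC a) z) with D. exact HD2.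
  apply (pseries_unique (dC a) z). exact HD1. apply H1; auto.
Qed.

Lemma lim_C (f : nat -> C) (l : C) :
  (forall eps, 0 < eps -> exists N, forall n, (N <= n)%nat -> Cmod (f n - l)%C < eps) ->
  filterlim f eventually (locally l).
Proof.
  intros H P [eps HP]. destruct (H eps (cond_pos eps)) as [N HN].
  exists N. intros n Hn. apply HP. apply (norm_compat1 (K:=C_AbsRing) (V:=C_NormedModule)).
  exact (HN n Hn).
Qed.

Lemma geom_C (z : C) : Cmod z < 1 -> is_series (fun n => z ^ n)%C (/ (1 - z))%C.
Proof.
  intros Hz.
  assert (Hz1 : (1 - z)%C <> 0%C).
  { intros E. assert (z = 1%C). { apply Ceq_minus in E. symmetry. exact E. }
    subst z. rewrite Cmod_1 in Hz. lra. }
  assert (Hm : 0 < Cmod (1 - z)%C) by (apply Cmod_gt_0; exact Hz1).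
  apply lim_C. intros eps Heps.
  assert (Hg := is_lim_seq_geom (Cmod z) ltac:(rewrite Rabs_pos_eq by apply Cmod_ge_0; exact Hz)).
  apply is_lim_seq_spec in Hg.
  assert (He : 0 < eps * Cmod (1 - z)%C) by nra.
  destruct (Hg (mkposreal _ He)) as [N HN]. exists N. intros n Hn.
  assert (E : (sum_n (fun n => z ^ n)%C n - / (1 - z))%C = (- (z ^ S n) / (1 - z))%C).
  { rewrite sum_n_fsum. 
    assert (G := fsum_geom z (S n)).
    assert (Hz2 : (z - 1)%C <> 0%C).
    { intros E'. apply Hz1. replace (1 - z)%C with (- (z - 1))%C by ring. rewrite E'.
      apply injective_projections; simpl; lra. }
    replace (fsum (fun j => z ^ j)%C (S n)) with (/ (z - 1) * ((z - 1) * fsum (fun j => z ^ j)%C (S n)))%C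
      by (field; exact Hz2).
    rewrite G. field. split; auto. }
  match goal with |- Cmod ?X < _ => replace X with (- (z ^ S n) / (1 - z))%C by (symmetry; exact E) end.
  unfold Cdiv. rewrite Cmod_mult, Cmod_opp, Cmod_inv, Cmod_pow by exact Hz1.
  specialize (HN (S n) ltac:(lia)). simpl in HN. rewrite Rminus_0_r in HN.
  rewrite Rabs_pos_eq in HN by (apply (pow_le _ (S n)), Cmod_ge_0).
  apply Rmult_lt_reg_r with (Cmod (1 - z)%C); auto.
  rewrite Rmult_assoc, Rinv_l by lra. simpl. simpl in HN. lra.
Qed.


Lemma bnd_range (gam del lam : R) (Hl : 0 <= lam) (Hlg : lam < gam) (Hgd : gam <= del) m : (2 <= m)%nat -> 0 <= bnd gam del lam m <= 1.
Proof.
  intros Hm. unfold bnd.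
  assert (H2 : 2 <= INR m) by (apply (le_INR 2); lia).
  assert (HD : 8 * gam <= INR m ^ 2 * (2 * gam + (del - gam) * (INR m - 1))).
  { assert (4 <= INR m ^ 2) by nra. assert (2 * gam <= 2 * gam + (del - gam) * (INR m - 1)) by nra. nra. }
  assert (0 < INR m ^ 2 * (2 * gam + (del - gam) * (INR m - 1))) by lra.
  split. apply Rdiv_le_0_compat; lra.
  apply Rmult_le_reg_r with (INR m ^ 2 * (2 * gam + (del - gam) * (INR m - 1))); auto.
  unfold Rdiv. rewrite Rmult_assoc, Rinv_l by lra. lra.
Qed.

Lemma ext_le1 (gam del lam : R) (Hl : 0 <= lam) (Hlg : lam < gam) (Hgd : gam <= del) n : Cmod (extremal_coeffs gam del lam n) <= 1.
Proof.
  destruct n as [|[|n]]; simpl extremal_coeffs.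
  - rewrite Cmod_0. lra.
  - rewrite Cmod_1. lra.
  - rewrite Cmod_R. rewrite Rabs_pos_eq; apply (bnd_range gam del lam Hl Hlg Hgd); lia.
Qed.

Lemma ext_has (gam del lam : R) (Hl : 0 <= lam) (Hlg : lam < gam) (Hgd : gam <= del) : has_series (extremal_coeffs gam del lam) (Ssum (extremal_coeffs gam del lam)).
Proof.
  intros z hz. unfold Ssum. apply epsilon_spec.
  apply (ex_series_le (K:=C_AbsRing) (V:=C_CompleteNormedModule)) with (b := fun n => Cmod z ^ n).
  - intros n. cs. rewrite Cmod_mult, Cmod_pow.
    assert (0 <= Cmod z ^ n) by (apply pow_le, Cmod_ge_0).
    assert (Hn := ext_le1 gam del lam Hl Hlg Hgd n). assert (0 <= Cmod (extremal_coeffs gam del lam n)) by apply Cmod_ge_0. nra.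
  - apply ex_series_geom. rewrite Rabs_pos_eq by apply Cmod_ge_0. exact hz.
Qed.

Lemma LopC_ext (gam del lam : R) (Hl : 0 <= lam) (Hlg : lam < gam) (Hgd : gam <= del) n : LopC gam del (extremal_coeffs gam del lam) n =
  match n with O => RtoC gam | S _ => RtoC (2 * (gam - lam)) end.
Proof.
  unfold LopC. destruct n as [|k].
  - simpl extremal_coeffs. simpl INR. rewrite Cmult_1_r. f_equal. ring.
  - change (extremal_coeffs gam del lam (S (S k))) with (RtoC (bnd gam del lam (S (S k)))).
    rewrite <- RtoC_mult. f_equal. unfold bnd.
    assert (Hk : 0 <= INR k) by apply pos_INR.
    rewrite !S_INR.
    assert (0 < (INR k + 1 + 1) ^ 2 * (2 * gam + (del - gam) * (INR k + 1 + 1 - 1))).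
    { apply Rmult_lt_0_compat. apply pow_lt; lra. nra. }
    field. split; nra.
Qed.

Lemma G_series (gam del lam : R) (Hl : 0 <= lam) (Hlg : lam < gam) (Hgd : gam <= del) z : Cmod z < 1 ->
  is_pseries (LopC gam del (extremal_coeffs gam del lam)) z
    (RtoC gam + RtoC (2 * (gam - lam)) * z / (1 - z))%C.
Proof.
  intros Hz.
  assert (Hz1 : (1 - z)%C <> 0%C).
  { intros E. assert (z = 1%C). { apply Ceq_minus in E. symmetry. exact E. }
    subst z. rewrite Cmod_1 in Hz. lra. }
  unfold is_pseries. apply is_series_decr_1.
  assert (G := is_series_scal_l (K:=C_AbsRing) (V:=C_NormedModule) (RtoC (2 * (gam - lam)) * z)%C _ _ (geom_C z Hz)).
  match goal with |- is_series _ ?X => replace X with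
      (scal (RtoC (2 * (gam - lam)) * z)%C (/ (1 - z))%C) end.
  - eapply is_series_ext; [| exact G]. intros n. simpl. rewrite (LopC_ext gam del lam Hl Hlg Hgd). cs. ring.
  - rewrite (LopC_ext gam del lam Hl Hlg Hgd). cs. field. exact Hz1.
Qed.

Lemma re_div z : Cmod z < 1 -> -1/2 < Re (z / (1 - z))%C.
Proof.
  intros Hz.
  assert (Hz1 : (1 - z)%C <> 0%C).
  { intros E. assert (z = 1%C). { apply Ceq_minus in E. symmetry. exact E. }
    subst z. rewrite Cmod_1 in Hz. lra. }
  assert (Hw : (z / (1 - z) * (1 - z))%C = z) by (field; exact Hz1).
  assert (H2 := Cmod2_alt z).
  assert (Hm : Cmod z ^ 2 < 1). { assert (0 <= Cmod z) by apply Cmod_ge_0. nra. }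
  destruct (z / (1 - z))%C as [u v] eqn:Ew.
  destruct z as [x y]. simpl in H2. simpl.
  assert (E1 := f_equal fst Hw). assert (E2 := f_equal snd Hw). simpl in E1, E2.
  assert (Hxy : x ^ 2 + y ^ 2 < 1) by lra.
  assert (Hx1 : x < 1).
  { destruct (Rlt_le_dec x 1); auto. assert (1 <= x ^ 2) by nra. assert (0 <= y ^ 2) by nra. lra. }
  assert (HD : 0 < (1 - x) ^ 2 + y ^ 2).
  { assert (0 < (1 - x) ^ 2) by (apply pow_lt; lra). assert (0 <= y ^ 2) by nra. lra. }
  assert (Hu : u * ((1 - x) ^ 2 + y ^ 2) = x * (1 - x) - y ^ 2).
  { replace (u * ((1 - x) ^ 2 + y ^ 2)) with
      ((u * (1 + - x) - v * (0 + - y)) * (1 - x) - (u * (0 + - y) + v * (1 + - x)) * y) by ring.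
    rewrite E1, E2. ring. }
  assert (Hp : 0 < (2 * u + 1) * ((1 - x) ^ 2 + y ^ 2)).
  { replace ((2 * u + 1) * ((1 - x) ^ 2 + y ^ 2)) with (2 * (u * ((1 - x) ^ 2 + y ^ 2)) + ((1 - x) ^ 2 + y ^ 2)) by ring.
    rewrite Hu. nra. }
  destruct (Rlt_le_dec (-1/2) u); auto.
  assert ((2 * u + 1) * ((1 - x) ^ 2 + y ^ 2) <= 0).
  { assert (0 <= -(2 * u + 1)) by lra.
    assert (0 <= -(2 * u + 1) * ((1 - x) ^ 2 + y ^ 2)) by (apply Rmult_le_pos; lra). lra. }
  lra.
Qed.



Theorem part2 (gam del lam : R) :
  0 <= lam -> lam < gam -> gam <= del ->
  (exists s : C -> C,
     has_series (extremal_coeffs gam del lam) s /\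
     in_RH0 gam del lam s (fun _ => 0%C) /\
     forall m : nat, (2 <= m)%nat ->
       Cmod (extremal_coeffs gam del lam m) + Cmod 0%C = bnd gam del lam m /\
       Rabs (Cmod (extremal_coeffs gam del lam m) - Cmod 0%C) = bnd gam del lam m /\
       Cmod (extremal_coeffs gam del lam m) = bnd gam del lam m).
Proof.
  intros Hl Hlg Hgd.
  set (e := extremal_coeffs gam del lam).
  assert (H0 := ext_has gam del lam Hl Hlg Hgd). fold e in H0.
  destruct (S_deriv e H0) as [Hd1 Hs1].
  destruct (S_deriv (dC e) Hd1) as [Hd2 Hs2].
  destruct (S_deriv (dC (dC e)) Hd2) as [Hd3 Hs3].
  exists (Ssum e). split. exact H0. split.
  - exists (Ssum (dC e)), (Ssum (dC (dC e))), (Ssum (dC (dC (dC e)))),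
      (fun _ => 0%C), (fun _ => 0%C), (fun _ => 0%C).
    split.
    + intros z hz.
      assert (Hc : cderiv (fun _ : C => 0%C) z 0%C) by exact (is_derive_const (K:=C_AbsRing) (V:=C_NormedModule) (RtoC 0) z).
      split. apply Hs1; auto. split. apply Hs2; auto. split. apply Hs3; auto.
      split. exact Hc. split. exact Hc. exact Hc.
    + intros z hz.
      assert (L := Lop_series gam del e _ _ _ z (Hd1 z hz) (Hd2 z hz) (Hd3 z hz)).
      assert (G := G_series gam del lam Hl Hlg Hgd z hz). fold e in G.
      rewrite (pseries_unique _ _ _ _ L G).
      assert (Z : Lop gam del 0%C 0%C 0%C z = 0%C) by (unfold Lop; ring).
      rewrite Z, Cmod_0, re_minus, re_RtoC.
      replace (RtoC gam + RtoC (2 * (gam - lam)) * z / (1 - z))%C with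
        (RtoC gam + RtoC (2 * (gam - lam)) * (z / (1 - z)))%C by (unfold Cdiv; ring).
      rewrite re_plus, re_scal_l, re_RtoC.
      assert (Hr := re_div z hz). nra.
  - intros m Hm. destruct m as [|[|k]]; try lia.
    assert (Hb := bnd_range gam del lam Hl Hlg Hgd (S (S k)) Hm).
    change (e (S (S k))) with (RtoC (bnd gam del lam (S (S k)))).
    assert (Z0 : Cmod 0%C = 0) by apply Cmod_0.
    rewrite Z0, Cmod_R, Rabs_pos_eq by lra.
    rewrite Rminus_0_r, Rabs_pos_eq by lra. split; [ring | split; reflexivity].
Qed.


Theorem theorem7 (gam del lam : R) :
  0 <= lam -> lam < gam -> gam <= del ->
  (forall (a b : nat -> C) (s t : C -> C),
     H0_coeffs a b -> has_series a s -> has_series b t ->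
     in_RH0 gam del lam s t ->
     forall m : nat, (2 <= m)%nat ->
       Cmod (a m) + Cmod (b m) <= bnd gam del lam m /\
       Rabs (Cmod (a m) - Cmod (b m)) <= bnd gam del lam m /\
       Cmod (a m) <= bnd gam del lam m)
  /\
  (exists s : C -> C,
     has_series (extremal_coeffs gam del lam) s /\
     in_RH0 gam del lam s (fun _ => 0%C) /\
     forall m : nat, (2 <= m)%nat ->
       Cmod (extremal_coeffs gam del lam m) + Cmod 0%C = bnd gam del lam m /\
       Rabs (Cmod (extremal_coeffs gam del lam m) - Cmod 0%C) = bnd gam del lam m /\
       Cmod (extremal_coeffs gam del lam m) = bnd gam del lam m).
Proof.
  intros Hl Hlg Hgd. split.
  - exact (part1 gam del lam Hl Hlg Hgd).
  - exact (part2 gam del lam Hl Hlg Hgd).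
Qed.
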